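(* There is no deterministic algorithm with advice of constant size that performs leader election in all feasible graphs. That is, for every integer $b$, there is no deterministic leader election algorithm with advice together with an assignment of advice strings of length at most $b$ to feasible graphs such that, in every feasible graph, the algorithm with the assigned advice performs leader election (in some finite time).
   Context: A graph is a simple undirected connected finite graph whose nodes have no identifiers; at each node $v$ of degree $d$ the incident edges carry distinct port numbers $0,\dots,d-1$ (local to each node). The truncated view $\mathcal{V}^0(v)$ is a single node; $\mathcal{V}^{l+1}(v)$ is the port-labelled rooted tree whose root has, for every neighbour $v_i$ of $v$, a child $x_i$ joined by an edge carrying the same two port numbers as $\{v,v_i\}$ (the one at $v$ at the root side), and $x_i$ is the root of a copy of $\mathcal{V}^l(v_i)$. The augmented truncated view $\mathcal{B}^l(v)$ is $\mathcal{V}^l(v)$ with each leaf labelled by the degree in $G$ of the node it represents. A graph is feasible if for some $l$ the views $\mathcal{B}^l(v)$ of all nodes are pairwise distinct. Model (LOCAL): synchronous rounds, all nodes start simultaneously, in each round every node exchanges arbitrary messages with all neighbours and computes arbitrarily. Leader election: every node $v$ outputs a sequence $(p_1,q_1,\dots,p_k,q_k)$ of nonnegative integers describing a simple path starting at $v$ whose $i$-th edge has port $p_i$ at its endpoint closer to $v$ and $q_i$ at the other endpoint; all these paths must end at a common node. Advice: an oracle knowing the entire port-labelled graph gives the same binary string to all nodes before the start; its length is the size of advice. In a deterministic algorithm with advice, the actions/output of node $v$ in round $r$ are a function of the advice and of $\mathcal{B}^r(v)$. *)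

(* Defs.v *)
From mathcomp Require Import all_boot.
Set Implicit Arguments. Unset Strict Implicit. Unset Printing Implicit Defensive.

(* A port-labelled graph: nodes are 0, ..., pg_n - 1 (nodes carry no
   identifiers visible to the algorithm; the numbering is only for the
   oracle / the statement).  Node v has degree pg_deg v, and for a port
   p < pg_deg v, pg_nbr v p = (u, q) means that the edge at port p of v
   leads to node u, where it has port q. *)
Record pgraph := PGraph {
  pg_n   : nat;
  pg_deg : nat -> nat;
  pg_nbr : nat -> nat -> nat * nat
}.

(* The walk starting at v following the sequence (p1,q1,...,pk,qk):
   the i-th edge has port p_i at the end closer to v and q_i at the
   other end. *)
Fixpoint walk (G : pgraph) (v : nat) (s : seq nat) : option (seq nat) :=
  match s with
  | [::] => Some [:: v]
  | p :: q :: s' =>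
      if (p < pg_deg G v) && ((pg_nbr G v p).2 == q) then
        match walk G (pg_nbr G v p).1 s' with
        | Some w => Some (v :: w)
        | None => None
        end
      else None
  | _ => None
  end.

Definition well_formed (G : pgraph) : Prop :=
  0 < pg_n G /\
  (forall v p, v < pg_n G -> p < pg_deg G v ->
     let (u, q) := pg_nbr G v p in
     [/\ u < pg_n G, q < pg_deg G u, pg_nbr G u q = (v, p) & u <> v]) /\
  (forall v p1 p2, v < pg_n G -> p1 < pg_deg G v -> p2 < pg_deg G v ->
     (pg_nbr G v p1).1 = (pg_nbr G v p2).1 -> p1 = p2) /\
  (forall u v, u < pg_n G -> v < pg_n G ->
     exists s w, walk G u s = Some w /\ last u w = v).

(* Augmented truncated views: leaves are labelled by the degree of the
   node they represent; an internal node has the list of its children,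
   in order of the port at the parent, each child edge labelled by
   (port at parent, port at child). *)
Inductive view : Type :=
  | VLeaf : nat -> view
  | VNode : seq (nat * nat * view) -> view.

Fixpoint bview (G : pgraph) (l : nat) (v : nat) : view :=
  match l with
  | 0 => VLeaf (pg_deg G v)
  | l'.+1 =>
      VNode [seq (p, (pg_nbr G v p).2, bview G l' (pg_nbr G v p).1)
            | p <- iota 0 (pg_deg G v)]
  end.

Definition feasible (G : pgraph) : Prop :=
  well_formed G /\
  exists l, forall u v, u < pg_n G -> v < pg_n G ->
    bview G l u = bview G l v -> u = v.

(* A deterministic algorithm with advice: in round r, node v's action
   (here: whether it outputs, and what) is a function of the advice and
   of B^r(v) (and of r, known since all nodes start simultaneously).
   None = no output yet. *)
Definition algorithm := seq bool -> nat -> view -> option (seq nat).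

Definition outputs (A : algorithm) (adv : seq bool) (G : pgraph) (v : nat)
    (out : seq nat) : Prop :=
  exists r, A adv r (bview G r v) = Some out /\
    forall r', r' < r -> A adv r' (bview G r' v) = None.

Definition elects (A : algorithm) (adv : seq bool) (G : pgraph) : Prop :=
  exists leader, leader < pg_n G /\
    forall v, v < pg_n G ->
      exists out w, outputs A adv G v out /\
        walk G v out = Some w /\ uniq w /\ last v w = leader.

(* Main.v *)
Require Import Defs.
From mathcomp Require Import all_boot zify.
From Stdlib Require Import Classical ClassicalEpsilon.
Set Implicit Arguments. Unset Strict Implicit. Unset Printing Implicit Defensive.

Definition vdeg (V : view) : nat :=
  match V with VLeaf d => d | VNode s => size s end.

Lemma bview_deg G l v : vdeg (bview G l v) = pg_deg G v.
Proof. by case: l => [|l] //=; rewrite size_map size_iota. Qed.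

Lemma view_deg G H l u v : bview G l u = bview H l v -> pg_deg G u = pg_deg H v.
Proof. by move=> E; rewrite -(bview_deg G l u) -(bview_deg H l v) E. Qed.

Lemma view_step G H l u v p : bview G l.+1 u = bview H l.+1 v ->
  p < pg_deg G u ->
  (pg_nbr G u p).2 = (pg_nbr H v p).2 /\
  bview G l (pg_nbr G u p).1 = bview H l (pg_nbr H v p).1.
Proof.
move=> E hp; have hd := view_deg E.
move: E => /= [] /(congr1 (fun s => nth (0,0,VLeaf 0) s p)).
rewrite (nth_map 0) ?size_iota // (nth_map 0) ?size_iota -?hd //.
by rewrite !nth_iota -?hd // add0n => -[-> ->].
Qed.

Lemma walk_head G v s w : walk G v s = Some w -> exists w', w = v :: w'.
Proof.
elim: s v w => [|p [|q s] IH] v w /=; first by move=> [<-]; exists [::].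
  by [].
case: ifP => // _; case E: (walk _ _ _) => [w'|] // [<-]; by exists w'.
Qed.

Lemma wf_nbr G v p : well_formed G -> v < pg_n G -> p < pg_deg G v ->
  [/\ (pg_nbr G v p).1 < pg_n G, (pg_nbr G v p).2 < pg_deg G (pg_nbr G v p).1,
      pg_nbr G (pg_nbr G v p).1 (pg_nbr G v p).2 = (v, p) & (pg_nbr G v p).1 <> v].
Proof.
move=> [_ [H _]] hv hp; move: (H v p hv hp); by case: (pg_nbr G v p).
Qed.

Lemma walk_inj G s : well_formed G -> forall u v wu wv, u < pg_n G -> v < pg_n G ->
  walk G u s = Some wu -> walk G v s = Some wv -> last u wu = last v wv -> u = v.
Proof.
move=> wf; move: {2}(size s) (leqnn (size s)) => n; elim: n s => [|n IH] [|p [|q s]] //= hs u v wu wv hu hv.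
- by move=> [<-] [<-].
- by move=> [<-] [<-].
case: ifP => // /andP [hpu /eqP hqu]; case Eu: (walk _ _ s) => [wu'|] // [<-].
case: ifP => // /andP [hpv /eqP hqv]; case Ev: (walk _ _ s) => [wv'|] // [<-].
have [au Hu] := walk_head Eu; have [av Hv] := walk_head Ev.
rewrite Hu Hv /= => hl.
have [nu _ Nu _] := wf_nbr wf hu hpu; have [nv _ Nv _] := wf_nbr wf hv hpv.
have e : (pg_nbr G u p).1 = (pg_nbr G v p).1.
  apply: (IH s _ _ _ _ _ nu nv Eu Ev); first by lia.
  by rewrite Hu Hv.
by move: Nu Nv; rewrite hqu hqv e => -> [].
Qed.

Definition firstout (A : algorithm) c G v r out :=
  A c r (bview G r v) = Some out /\ forall r', r' < r -> A c r' (bview G r' v) = None.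

Lemma outputs_unique A c G v o1 o2 : outputs A c G v o1 -> outputs A c G v o2 -> o1 = o2.
Proof.
move=> [r1 [E1 F1]] [r2 [E2 F2]].
case: (ltngtP r1 r2) => h.
- by rewrite F2 in E1.
- by rewrite F1 in E2.
- by subst; rewrite E1 in E2; case: E2.
Qed.

Lemma outputs_transfer A c G H x y r out :
  (forall r', r' <= r -> bview G r' x = bview H r' y) ->
  firstout A c H y r out -> outputs A c G x out.
Proof.
move=> E [h1 h2]; exists r; split; first by rewrite E.
by move=> r' lt; rewrite E ?h2 // ltnW.
Qed.

Definition fwd G v := (pg_nbr G v 0).1.

Section F.
Variable G : pgraph.
Hypothesis wf : well_formed G.
Hypothesis hd : forall x, 0 < pg_deg G x.

Lemma fwd_lt x : x < pg_n G -> fwd G x < pg_n G.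
Proof. by move=> hx; case: (wf_nbr wf hx (hd x)). Qed.

Lemma iter_fwd_lt k x : x < pg_n G -> iter k (fwd G) x < pg_n G.
Proof. by elim: k => //= k IH hx; apply: fwd_lt; apply: IH. Qed.

Lemma fwd_views k l u v : bview G (k + l) u = bview G (k + l) v ->
  bview G l (iter k (fwd G) u) = bview G l (iter k (fwd G) v).
Proof.
elim: k u v => // k IH u v E; rewrite !iterSr; apply: IH.
by have [] := @view_step G G (k + l) u v 0 E (hd u).
Qed.

Lemma fwd_inj k l u v : u < pg_n G -> v < pg_n G ->
  bview G (k + l) u = bview G (k + l) v ->
  iter k (fwd G) u = iter k (fwd G) v -> u = v.
Proof.
elim: k u v => // k IH u v hu hv E; rewrite !iterSr => Ei.
have [e1 e2] := @view_step G G (k + l) u v 0 E (hd u).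
have ef : fwd G u = fwd G v by apply: IH (fwd_lt hu) (fwd_lt hv) e2 Ei.
have [_ _ Nu _] := wf_nbr wf hu (hd u).
have [_ _ Nv _] := wf_nbr wf hv (hd v).
by move: Nu Nv; rewrite e1; rewrite /fwd in ef; rewrite ef => -> [].
Qed.

Lemma bound_ex (P : nat -> nat -> Prop) n : (forall u, u < n -> exists k, P u k) ->
  exists K, forall u, u < n -> exists k, k <= K /\ P u k.
Proof.
elim: n => [|n IH] H; first by exists 0.
have [K HK] : exists K, forall u, u < n -> exists k, k <= K /\ P u k.
  by apply: IH => u hu; apply: H; lia.
have [k0 Hk0] := H n (ltnSn n).
exists (maxn K k0) => u hu; case: (ltngtP u n) => h.
- have [k [h1 h2]] := HK u h; exists k; split => //; lia.
- lia.
- subst; exists k0; split => //; lia.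
Qed.

Lemma feasible_fwd Z d :
  (forall u, u < pg_n G -> exists k, iter k (fwd G) u = Z) ->
  (forall x l, x < pg_n G -> d <= l -> bview G l x = bview G l Z -> x = Z) ->
  feasible G.
Proof.
move=> H1 H2; split => //.
have [K HK] := bound_ex H1.
exists (K + d) => u v hu hv E.
have [k [hk Ek]] := HK u hu.
have E' : bview G (k + (K - k + d)) u = bview G (k + (K - k + d)) v.
  by have -> : k + (K - k + d) = K + d by lia.
have Ev := fwd_views E'.
have hz : iter k (fwd G) v = Z.
  apply: (H2 _ (K - k + d)); [exact: iter_fwd_lt | lia | by rewrite -Ev Ek].
by apply: (fwd_inj hu hv E'); rewrite Ek hz.
Qed.
End F.

Definition nd (q : nat) (t : bool) : nat := t + q.*2.

Lemma nd_half q t : (nd q t)./2 = q.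
Proof. exact: half_bit_double. Qed.
Lemma nd_odd q t : odd (nd q t) = t.
Proof. by rewrite /nd oddD odd_double oddb addbF. Qed.
Lemma nd_surj v : nd (v./2) (odd v) = v.
Proof. exact: odd_double_half. Qed.
Lemma nd_inj q t q' t' : nd q t = nd q' t' -> q = q' /\ t = t'.
Proof. by move=> E; move: (congr1 half E) (congr1 odd E); rewrite !nd_half !nd_odd. Qed.
Lemma nd_lt q t L : (nd q t < L.*2) = (q < L).
Proof. by rewrite /nd; case: t; lia. Qed.

Definition reach G u v := exists s w, walk G u s = Some w /\ last u w = v.

Lemma reach_refl G u : reach G u u.
Proof. by exists [::], [:: u]. Qed.

Lemma reach_step G u v p : p < pg_deg G u -> reach G (pg_nbr G u p).1 v -> reach G u v.
Proof.
move=> hp [s [w' [E1 E2]]]; exists [:: p, (pg_nbr G u p).2 & s], (u :: w').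
rewrite /= hp eqxx E1; split => //.
by have [a Ha] := walk_head E1; move: E2; rewrite Ha.
Qed.

Lemma reach_trans G u x v : reach G u x -> reach G x v -> reach G u v.
Proof.
move=> [s [w [E1 E2]]] R; move: {2}(size s) (leqnn (size s)) => n.
elim: n s u w E1 E2 => [|n IH] [|p [|q s]] u w //=.
- by move=> [<-] /= -> _.
- by move=> [<-] /= -> _.
case: ifP => // /andP [hp /eqP hq]; case E: (walk _ _ s) => [w'|] // [<-] /= El hs.
apply: (reach_step hp); apply: (IH s _ w') => //; last by lia.
by have [a Ha] := walk_head E; move: El; rewrite Ha.
Qed.

Section W.
Variable w : seq bool.
Local Notation L := (size w).
Definition bt p := nth false w p.
Definition nx p := p.+1 %% L.
Definition pv p := (p + L.-1) %% L.

Definition gdeg v := if odd v then (if bt v./2 then 2 else 1) else (if bt v./2 then 2 else 3).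
Definition gnbr v i := let p := v./2 in
  if odd v then (if bt p then (if i == 0 then (nd (nx p) false, 1) else (nd p false, 0))
                 else (nd p false, 2))
  else if i == 0 then (if bt p then (nd p true, 1) else (nd (nx p) false, 1))
  else if i == 1 then (nd (pv p) (bt (pv p)), 0)
  else (nd p true, 0).
Definition gr := PGraph L.*2 gdeg gnbr.

Lemma gdegE q t : gdeg (nd q t) = if t then (if bt q then 2 else 1) else (if bt q then 2 else 3).
Proof. by rewrite /gdeg nd_half nd_odd. Qed.

Lemma gnbrE q t i : gnbr (nd q t) i =
  if t then (if bt q then (if i == 0 then (nd (nx q) false, 1) else (nd q false, 0))
                 else (nd q false, 2))
  else if i == 0 then (if bt q then (nd q true, 1) else (nd (nx q) false, 1))
  else if i == 1 then (nd (pv q) (bt (pv q)), 0)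
  else (nd q true, 0).
Proof. by rewrite /gnbr nd_half nd_odd. Qed.

Hypothesis L3 : 3 <= L.

Lemma nxE q : q < L -> nx q = if q.+1 == L then 0 else q.+1.
Proof.
move=> h; rewrite /nx; case: eqP => [->|ne]; first by rewrite modnn.
by rewrite modn_small //; lia.
Qed.

Lemma pvE q : q < L -> pv q = if q == 0 then L.-1 else q.-1.
Proof.
move=> h; rewrite /pv; case: eqP => [->|ne]; first by rewrite add0n modn_small //; lia.
have -> : q + L.-1 = q.-1 + L by lia.
by rewrite modnDr modn_small //; lia.
Qed.

Lemma nx_lt q : q < L -> nx q < L.
Proof. by move=> h; rewrite nxE //; case: eqP; lia. Qed.
Lemma pv_lt q : q < L -> pv q < L.
Proof. by move=> h; rewrite pvE //; case: eqP; lia. Qed.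
Lemma pv_nx q : q < L -> pv (nx q) = q.
Proof.
move=> h; have h' := nx_lt h; rewrite pvE //; move: h'; rewrite nxE //.
by case: (q.+1 =P L) => e; case: eqP; lia.
Qed.
Lemma nx_pv q : q < L -> nx (pv q) = q.
Proof.
move=> h; have h' := pv_lt h; rewrite nxE //; move: h'; rewrite pvE //.
by case: (q =P 0) => e; case: eqP; lia.
Qed.
Lemma nx_neq q : q < L -> nx q <> q.
Proof. by move=> h; rewrite nxE //; case: eqP; lia. Qed.
Lemma pv_neq q : q < L -> pv q <> q.
Proof. by move=> h; rewrite pvE //; case: eqP; lia. Qed.
Lemma nx_pv_neq q : q < L -> nx q <> pv q.
Proof. by move=> h; rewrite nxE // pvE //; case: (q.+1 =P L); case: (q =P 0); lia. Qed.

Lemma nd_neq q t q' t' : (q <> q') \/ (t <> t') -> nd q t <> nd q' t'.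
Proof. by move=> H /nd_inj [e1 e2]; case: H. Qed.

Lemma reach_ec q t : reach gr (nd q t) (nd q false).
Proof.
case: t; last exact: reach_refl.
case Eb: (bt q).
- by apply: (@reach_step _ _ _ 1); rewrite /= ?gdegE ?gnbrE Eb //=; apply: reach_refl.
- by apply: (@reach_step _ _ _ 0); rewrite /= ?gdegE ?gnbrE Eb //=; apply: reach_refl.
Qed.

Lemma reach_ce q t : reach gr (nd q false) (nd q t).
Proof.
case: t; last exact: reach_refl.
case Eb: (bt q).
- by apply: (@reach_step _ _ _ 0); rewrite /= ?gdegE ?gnbrE Eb //=; apply: reach_refl.
- by apply: (@reach_step _ _ _ 2); rewrite /= ?gdegE ?gnbrE Eb //=; apply: reach_refl.
Qed.

Lemma reach_cnx q : reach gr (nd q false) (nd (nx q) false).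
Proof.
case Eb: (bt q).
- apply: (@reach_step _ _ _ 0); rewrite /= ?gdegE ?gnbrE Eb //=.
  by apply: (@reach_step _ _ _ 0); rewrite /= ?gdegE ?gnbrE Eb //=; apply: reach_refl.
- by apply: (@reach_step _ _ _ 0); rewrite /= ?gdegE ?gnbrE Eb //=; apply: reach_refl.
Qed.

Lemma reach_ck q k : q < L -> reach gr (nd q false) (nd ((q + k) %% L) false).
Proof.
move=> hq; elim: k => [|k IH]; first by rewrite addn0 modn_small //; apply: reach_refl.
apply: reach_trans IH _.
have -> : (q + k.+1) %% L = nx ((q + k) %% L) by rewrite /nx addnS -[((q + k) %% L).+1]addn1 modnDml addn1.
exact: reach_cnx.
Qed.

Lemma gr_wf : well_formed gr.
Proof.
split; first by rewrite /=; lia.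
split.
  move=> v i /=; rewrite -(nd_surj v); move: (v./2) (odd v) => q t.
  rewrite nd_lt => hq.
  have h1 := nx_lt hq; have h2 := pv_lt hq.
  rewrite gdegE gnbrE.
  case: t; case Eb: (bt q) => /=.
  - case: i => [|[|i]] // _ /=; rewrite ?nd_lt ?gdegE ?gnbrE /=.
    + by rewrite pv_nx // Eb; split => //; [case: (bt (nx q)) | apply: nd_neq; left; exact: nx_neq].
    + by rewrite Eb; split => //; apply: nd_neq; right.
  - case: i => [|i] // _ /=; rewrite ?nd_lt ?gdegE ?gnbrE /= Eb.
    by split => //; apply: nd_neq; right.
  - case: i => [|[|i]] // _ /=; rewrite ?nd_lt ?gdegE ?gnbrE /=.
    + by rewrite Eb; split => //; apply: nd_neq; right.
    + rewrite nx_pv //; case Eb': (bt (pv q)) => /=; rewrite ?Eb' //.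
      * by split => //; apply: nd_neq; right.
      * by split => //; apply: nd_neq; left; exact: pv_neq.
  - case: i => [|[|[|i]]] // _ /=; rewrite ?nd_lt ?gdegE ?gnbrE /=.
    + rewrite pv_nx // Eb; split => //; first by case: (bt (nx q)).
      by apply: nd_neq; left; exact: nx_neq.
    + rewrite nx_pv //; case Eb': (bt (pv q)) => /=; rewrite ?Eb' //.
      * by split => //; apply: nd_neq; right.
      * by split => //; apply: nd_neq; left; exact: pv_neq.
    + by rewrite Eb; split => //; apply: nd_neq; right.
split.
  move=> v i1 i2 /=; rewrite -(nd_surj v); move: (v./2) (odd v) => q t.
  rewrite nd_lt => hq.
  have h1 := nx_neq hq; have h2 := pv_neq hq; have h3 := nx_pv_neq hq.
  rewrite gdegE !gnbrE.
  case: t; case Eb: (bt q) => /=.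
  - case: i1 => [|[|i1]] //; case: i2 => [|[|i2]] //= _ _ /nd_inj [] //; lia.
  - by case: i1 => [|i1] //; case: i2 => [|i2].
  - case: i1 => [|[|i1]] //; case: i2 => [|[|i2]] //= _ _ /nd_inj [] //; lia.
  - case: i1 => [|[|[|i1]]] //; case: i2 => [|[|[|i2]]] //= _ _ /nd_inj [] //; lia.
move=> u v /= hu hv; apply: (@reach_trans _ _ (nd (u./2) false)).
  by rewrite -{1}(nd_surj u); apply: reach_ec.
apply: (@reach_trans _ _ (nd (v./2) false)); last first.
  by rewrite -{2}(nd_surj v); apply: reach_ce.
have hu' : u./2 < L by move: hu; rewrite -{1}(nd_surj u) nd_lt.
have hv' : v./2 < L by move: hv; rewrite -{1}(nd_surj v) nd_lt.
have := reach_ck (v./2 + L - u./2) hu'.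
have -> : u./2 + (v./2 + L - u./2) = v./2 + L by lia.
by rewrite modnDr modn_small.
Qed.
End W.

Lemma gdeg_pos w x : 0 < gdeg w x.
Proof. by rewrite /gdeg; case: (odd x); case: (bt w _). Qed.

Lemma fwd_c w q : fwd (gr w) (nd q false) = if bt w q then nd q true else nd (nx w q) false.
Proof. by rewrite /fwd /= gnbrE; case: (bt w q). Qed.
Lemma fwd_e w q : fwd (gr w) (nd q true) = if bt w q then nd (nx w q) false else nd q false.
Proof. by rewrite /fwd /= gnbrE; case: (bt w q). Qed.

Lemma iterc w p j : ~~ bt w p -> (forall i, 0 < i <= j -> bt w ((p + i) %% size w)) ->
  iter j.*2.+1 (fwd (gr w)) (nd p false) = nd ((p + j).+1 %% size w) false.
Proof.
move=> hp; elim: j => [|j IH] H.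
  by rewrite /= fwd_c (negbTE hp) addn0.
have -> : j.+1.*2.+1 = 2 + j.*2.+1 by lia.
rewrite iterD IH; last by move=> i hi; apply: H; lia.
have hb : bt w ((p + j).+1 %% size w) by rewrite -addnS; apply: H; lia.
rewrite /= fwd_c hb fwd_e hb /nx.
by rewrite -[((p + j).+1 %% size w).+1]addn1 modnDml addn1 addnS.
Qed.

Lemma iter_nx w q : exists k, iter k (fwd (gr w)) (nd q false) = nd (nx w q) false.
Proof.
case Eb: (bt w q).
- by exists 2; rewrite /= fwd_c Eb fwd_e Eb.
- by exists 1; rewrite /= fwd_c Eb.
Qed.

Lemma iter_ck w q k : q < size w -> exists k', iter k' (fwd (gr w)) (nd q false) = nd ((q + k) %% size w) false.
Proof.
move=> hq; elim: k => [|k [k1 IH]]; first by exists 0; rewrite addn0 modn_small.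
have [k2 H2] := iter_nx w ((q + k) %% size w).
exists (k2 + k1); rewrite iterD IH H2.
by rewrite /nx addnS -[((q + k) %% size w).+1]addn1 modnDml addn1.
Qed.

Section Good.
Variables (W : seq bool) (m : nat).
Hypothesis hW : 0 < size W < m.
Hypothesis hW0 : head true W = false.
Local Notation w := (W ++ false :: nseq m true).
Local Notation s := (size W).

Lemma sizew : size w = s + m.+1.
Proof. by rewrite size_cat /= size_nseq. Qed.

Lemma bt_s : bt w s = false.
Proof. by rewrite /bt nth_cat ltnn subnn. Qed.

Lemma bt_0 : bt w 0 = false.
Proof. by rewrite /bt nth_cat; case: W hW hW0 => [|a W'] //= _ ->. Qed.

Lemma bt_run q : s < q < size w -> bt w q.
Proof.
rewrite sizew => /andP [h1 h2]; rewrite /bt nth_cat ltnNge ltnW //=.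
have -> : q - s = (q - s).-1.+1 by lia.
by rewrite /= nth_nseq; case: ifP => //; lia.
Qed.

Lemma word_pos p : p < size w -> ~~ bt w p ->
  (forall i, 0 < i <= m -> bt w ((p + i) %% size w)) -> p = s.
Proof.
move=> hp hb H; case: (ltngtP p s) => // h.
- have hi : 0 < s - p <= m by lia.
  have := H _ hi.
  have -> : p + (s - p) = s by lia.
  by rewrite modn_small ?bt_s //; rewrite sizew; lia.
- have hi : 0 < size w - p <= m by move: hp; rewrite sizew; lia.
  have := H _ hi.
  have -> : p + (size w - p) = size w by lia.
  by rewrite modnn bt_0.
Qed.

Lemma L3 : 3 <= size w.
Proof. by rewrite sizew; lia. Qed.

Lemma gr_feasible : feasible (gr w).
Proof.
have wf := gr_wf L3.
have hd : forall x, 0 < pg_deg (gr w) x by move=> x; apply: gdeg_pos.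
apply: (@feasible_fwd _ wf hd (nd s false) m.*2.+1).
- move=> u hu; have hs : s < size w by rewrite sizew; lia.
  move: hu; rewrite -(nd_surj u) /= nd_lt; move: (u./2) (odd u) => q t hq.
  have [k Hk] := iter_ck (s + size w - q) hq.
  have E : (q + (s + size w - q)) %% size w = s.
    have -> : q + (s + size w - q) = s + size w by lia.
    by rewrite modnDr modn_small.
  rewrite E in Hk.
  case: t.
  + have [k0 H0] : exists k0, iter k0 (fwd (gr w)) (nd q true) = nd q false \/
                              iter k0 (fwd (gr w)) (nd q true) = nd (nx w q) false.
      by exists 1; rewrite /= fwd_e; case: (bt w q); [right | left].
    case: H0 => H0.
    * by exists (k + k0); rewrite iterD H0.
    * have [k' Hk'] := iter_ck (s + size w - nx w q) (nx_lt L3 hq).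
      exists (k' + k0); rewrite iterD H0 Hk'.
      have -> : nx w q + (s + size w - nx w q) = s + size w by have := nx_lt L3 hq; lia.
      by rewrite modnDr modn_small.
  + by exists k.
- move=> x l hx hl E.
  have hs : s < size w by rewrite sizew; lia.
  move: hx E; rewrite -(nd_surj x) /= nd_lt; move: (x./2) (odd x) => q t hq E.
  have hdg := view_deg E; rewrite /= !gdegE bt_s in hdg.
  case: t E hdg => E; first by case: (bt w q).
  case Eb: (bt w q) => // _.
  have Hrun : forall j, j <= m -> forall i, 0 < i <= j -> bt w ((q + i) %% size w).
    elim=> [|j IH] hj i hi; first by lia.
    case: (ltngtP i j.+1) => hij; last 2 first.
    + by lia.
    + subst i.
      have hZ : forall i, 0 < i <= j -> bt w ((s + i) %% size w).
        by move=> i' hi'; rewrite modn_small; [apply: bt_run | ]; rewrite sizew; lia.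
      have Ex := iterc (negbT Eb) (IH (ltnW hj)).
      have EZ := iterc (negbT bt_s) hZ.
      have E' : bview (gr w) (j.*2.+1 + (l - j.*2.+1)) (nd q false) =
                bview (gr w) (j.*2.+1 + (l - j.*2.+1)) (nd s false).
        by have -> : j.*2.+1 + (l - j.*2.+1) = l by lia.
      have := view_deg (fwd_views hd E'); rewrite Ex EZ /= !gdegE.
      rewrite (modn_small (_ : (s + j).+1 < size w)); last by rewrite sizew; lia.
      rewrite (@bt_run (s + j).+1); last by rewrite sizew; lia.
      by rewrite addnS; case: (bt w _).
    + by apply: IH; lia.
  by rewrite (word_pos hq (negbT Eb) (Hrun m (leqnn m))).
Qed.
End Good.

Lemma size_fn (T : Type) K (x : seq T) : size (flatten (nseq K x)) = K * size x.
Proof. by elim: K => //= K IH; rewrite size_cat IH mulSn. Qed.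

Lemma nth_fn (T : Type) (d : T) K (x : seq T) q : q < K * size x ->
  nth d (flatten (nseq K x)) q = nth d x (q %% size x).
Proof.
elim: K q => [|K IH] q //=.
rewrite mulSn nth_cat => hq; case: ltnP => h; first by rewrite modn_small.
rewrite IH; last by lia.
by rewrite -[in RHS](subnK h) modnDr.
Qed.

Section T.
Variables (wi t : seq bool) (K : nat).
Local Notation N := (size wi).
Local Notation wj := (flatten (nseq K wi) ++ t).
Local Notation P := (K * N).
Hypothesis hN : 0 < N.

Definition phi v := nd ((v./2) %% N) (odd v).
Lemma phi_nd x b : phi (nd x b) = nd (x %% N) b.
Proof. by rewrite /phi nd_half nd_odd. Qed.

Lemma bt_pref q : q < P -> bt wj q = bt wi (q %% N).
Proof. by move=> h; rewrite /bt nth_cat size_fn h nth_fn. Qed.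

Lemma sizewj : size wj = P + size t.
Proof. by rewrite size_cat size_fn. Qed.

Lemma loc q b : 0 < q -> q.+1 < P ->
  gdeg wj (nd q b) = gdeg wi (phi (nd q b)) /\
  forall i, i < gdeg wj (nd q b) ->
    gnbr wi (phi (nd q b)) i = (phi (gnbr wj (nd q b) i).1, (gnbr wj (nd q b) i).2) /\
    q <= ((gnbr wj (nd q b) i).1)./2 + 1 /\ ((gnbr wj (nd q b) i).1)./2 <= q.+1.
Proof.
move=> h0 h1.
have enj : nx wj q = q.+1 by rewrite /nx modn_small // sizewj; lia.
have epj : pv wj q = q.-1.
  rewrite /pv; have -> : q + (size wj).-1 = q.-1 + size wj by rewrite sizewj; lia.
  by rewrite modnDr modn_small // sizewj; lia.
have eni : nx wi (q %% N) = q.+1 %% N by rewrite /nx -addn1 modnDml addn1.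
have epi : pv wi (q %% N) = q.-1 %% N.
  rewrite /pv modnDml; have -> : q + N.-1 = q.-1 + N by lia.
  by rewrite modnDr.
have b0 : bt wi (q %% N) = bt wj q by rewrite bt_pref //; lia.
have b1 : bt wi (q.-1 %% N) = bt wj q.-1 by rewrite bt_pref //; lia.
rewrite phi_nd !gdegE b0; split => // i hi; rewrite !gnbrE eni epi b0 enj epj b1.
case: b hi; case: (bt wj q) => hi.
- case: i hi => [|i] _ /=; rewrite ?phi_nd ?nd_half; split => //; lia.
- case: i hi => [|i] // _ /=; rewrite ?phi_nd ?nd_half; split => //; lia.
- case: i hi => [|[|i]] // _ /=; rewrite ?phi_nd ?nd_half; split => //; lia.
- case: i hi => [|[|[|i]]] // _ /=; rewrite ?phi_nd ?nd_half; split => //; lia.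
Qed.

Lemma transfer r u : r < u./2 -> u./2 + r + 2 <= P ->
  bview (gr wj) r u = bview (gr wi) r (phi u).
Proof.
elim: r u => [|r IH] u h1 h2.
  have h3 : (u./2).+1 < P by lia.
  by rewrite -(nd_surj u) /=; have [-> _] := loc (odd u) h1 h3.
have h0 : 0 < u./2 by lia.
have h3 : (u./2).+1 < P by lia.
rewrite -(nd_surj u) /=.
have [ed en] := loc (odd u) h0 h3.
congr VNode; rewrite -ed; apply/eq_in_map => i; rewrite mem_iota add0n => /andP [_ hi].
have [E [b1 b2]] := en i hi.
by rewrite E /= IH //; lia.
Qed.
End T.

Fixpoint allb b : seq (seq bool) :=
  match b with
  | 0 => [:: [::]]
  | b'.+1 => [::] :: (map (cons true) (allb b') ++ map (cons false) (allb b'))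
  end.

Lemma allbP b c : size c <= b -> c \in allb b.
Proof.
elim: b c => [|b IH] [|x c] //= h.
rewrite in_cons mem_cat; apply/orP; right; apply/orP.
by case: x; [left | right]; apply: map_f; apply: IH.
Qed.

Lemma firstout_time A c G v r1 r2 o1 o2 :
  firstout A c G v r1 o1 -> firstout A c G v r2 o2 -> r1 = r2.
Proof.
move=> [E1 F1] [E2 F2]; case: (ltngtP r1 r2) => // h.
- by rewrite F2 in E1.
- by rewrite F1 in E2.
Qed.

Lemma exR (A : algorithm) (ls : seq (seq bool)) G v :
  exists R, forall c r out, c \in ls -> firstout A c G v r out -> r <= R.
Proof.
elim: ls => [|c ls [R HR]]; first by exists 0.
case: (classic (exists r out, firstout A c G v r out)) => [[r0 [o0 H0]]|N].
- exists (maxn R r0) => c' r out; rewrite in_cons => /orP [/eqP ->|hc] F.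
  + by rewrite (firstout_time F H0); lia.
  + by have := HR _ _ _ hc F; lia.
- exists R => c' r out; rewrite in_cons => /orP [/eqP ->|hc] F.
  + by case: N; exists r, out.
  + exact: HR hc F.
Qed.

Section Main.
Variables (A : algorithm) (b : nat).

Definition Rf (w : seq bool) : nat :=
  proj1_sig (constructive_indefinite_description _ (exR A (allb b) (gr w) 0)).

Lemma RfP w c r out : c \in allb b -> firstout A c (gr w) 0 r out -> r <= Rf w.
Proof.
rewrite /Rf; case: (constructive_indefinite_description _ _) => R HR /=; exact: HR.
Qed.

Definition Kf (w : seq bool) := (Rf w).*2 + 4.

Fixpoint ws (n : nat) : seq bool :=
  match n with
  | 0 => [:: false; false; true; true]
  | n'.+1 => flatten (nseq (Kf (ws n')) (ws n')) ++ false :: nseq (Kf (ws n') * size (ws n')).+1 true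
  end.

Lemma ws_good n : exists W m, ws n = W ++ false :: nseq m true /\ 0 < size W < m /\ head true W = false.
Proof.
elim: n => [|n [W [m [E [h1 h2]]]]]; first by exists [:: false], 2.
exists (flatten (nseq (Kf (ws n)) (ws n))), (Kf (ws n) * size (ws n)).+1; split => //.
have hs : 0 < size (ws n) by rewrite E size_cat /=; lia.
rewrite size_fn; split; first by rewrite /Kf; nia.
rewrite /Kf addn4 /= E; case: W h1 h2 {E hs} => [|x W'] //=.
Qed.

Lemma ws_size n : 0 < size (ws n).
Proof. by have [W [m [-> _]]] := ws_good n; rewrite size_cat /=; lia. Qed.

Lemma ws_feasible n : feasible (gr (ws n)).
Proof. by have [W [m [-> [h1 h2]]]] := ws_good n; apply: gr_feasible. Qed.

Lemma ws_pref i j : i < j -> exists t, ws j = flatten (nseq (Kf (ws i)) (ws i)) ++ t.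
Proof.
elim: j => [|j IH] //; rewrite ltnS leq_eqVlt => /orP [/eqP ->|h].
  by eexists.
have [t Ht] := IH h.
rewrite /=; have -> : Kf (ws j) = (Kf (ws j)).-1.+1 by rewrite /Kf; lia.
by rewrite /= {1}Ht -!catA; eexists.
Qed.

End Main.

Theorem proposition7 :
  forall b : nat,
    ~ (exists (A : algorithm) (adv : pgraph -> seq bool),
         (forall G, feasible G -> size (adv G) <= b) /\
         (forall G, feasible G -> elects A (adv G) G)).
Proof.
move=> b [A [adv [H1 H2]]].
pose s := map (fun n => adv (gr (ws A b n))) (iota 0 (size (allb b)).+1).
have hsub : {subset s <= allb b}.
  move=> c /mapP [n _ ->]; apply: allbP; apply: H1; exact: ws_feasible.
have : ~~ uniq s.
  apply/negP => U; have := uniq_leq_size U hsub.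
  by rewrite size_map size_iota ltnn.
case/(uniqPn [::]) => i [j [hij hj]].
rewrite size_map size_iota in hj.
rewrite !(nth_map 0) ?size_iota; try lia.
rewrite !nth_iota ?add0n; try lia.
move=> Ec.
set wi := ws A b i; set wj := ws A b j.
set c := adv (gr wi).
have [t Ht] := ws_pref A b hij; rewrite -/wi -/wj in Ht.
have hN : 0 < size wi by apply: ws_size.
have [ld [_ Hi]] := H2 _ (ws_feasible A b i); rewrite -/wi -/c in Hi.
have h0 : 0 < pg_n (gr wi) by rewrite /= double_gt0.
have [out [_ [[r [Er Fr]] _]]] := Hi 0 h0.
have hr : r <= Rf A b wi.
  by apply: (@RfP A b wi c r out); [apply: allbP; apply: H1; exact: ws_feasible | split].
have [wfj _] := ws_feasible A b j; rewrite -/wj in wfj.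
have [ld' [_ Hj]] := H2 _ (ws_feasible A b j); rewrite -/wj -Ec -/c in Hj.
have hK : r.*2 + 4 <= Kf A b wi by rewrite /Kf; lia.
have key : forall a, r < a -> a * size wi + r + 2 <= Kf A b wi * size wi ->
    exists w, walk (gr wj) (nd (a * size wi) false) out = Some w /\
                last (nd (a * size wi) false) w = ld'.
  move=> a ha hb.
  have hx : nd (a * size wi) false < pg_n (gr wj).
    by rewrite /= nd_lt Ht size_cat size_fn; lia.
  have [o [w [Ho [Hw [_ Hl]]]]] := Hj _ hx.
  have Ht2 : outputs A c (gr wj) (nd (a * size wi) false) out.
    apply: (@outputs_transfer A c (gr wj) (gr wi) _ 0 r out); last by split.
    move=> r' hr'; rewrite Ht transfer //; last by rewrite nd_half; nia.
      by rewrite phi_nd modnMl.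
    by rewrite nd_half; nia.
  by rewrite -(outputs_unique Ho Ht2); exists w.
have k1 : r.+1 * size wi + r + 2 <= Kf A b wi * size wi by nia.
have k2 : r.+2 * size wi + r + 2 <= Kf A b wi * size wi by nia.
have [w1 [W1 L1]] := key r.+1 (ltnSn _) k1.
have [w2 [W2 L2]] := key r.+2 (leqnSn _) k2.
have x1 : nd (r.+1 * size wi) false < pg_n (gr wj) by rewrite /= nd_lt Ht size_cat size_fn; nia.
have x2 : nd (r.+2 * size wi) false < pg_n (gr wj) by rewrite /= nd_lt Ht size_cat size_fn; nia.
have e12 : last (nd (r.+1 * size wi) false) w1 = last (nd (r.+2 * size wi) false) w2 by rewrite L1 L2.
have [e _] := nd_inj (walk_inj wfj x1 x2 W1 W2 e12).
by nia.
Qed.
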